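(* Let $\{m_k:k\ge0\}$ be any sequence of positive reals with $\sum_k m_k=\infty$ and $m_k\to0$; let $S_0=0$ and $S_{k+1}=\sum_{i=0}^k m_i$. Define $f_j:(S_j,S_{j+1}]\to\mathbb{R}$, $j\ge0$, recursively with $c_0=0$ and $c_j=f_{j-1}(S_j)$ for $j\ge1$, by $$f_j(x)=\begin{cases}-x+S_j+c_j & x\in(S_j,S_j+\tfrac{m_j}{16})\\ \tfrac{8}{m_j}(x-S_j-\tfrac{m_j}{8})^2-\tfrac{3m_j}{32}+c_j & x\in[S_j+\tfrac{m_j}{16},S_j+\tfrac{3m_j}{16})\\ -\tfrac{5m_j}{16}\exp\!\big(\tfrac{5m_j/16}{x-S_j-m_j/2}+1\big)+\tfrac{m_j}{4}+c_j & x\in[S_j+\tfrac{3m_j}{16},S_j+\tfrac{m_j}{2})\\ \tfrac{m_j}{4}+c_j & x=S_j+\tfrac{m_j}{2}\\ \tfrac{5m_j}{16}\exp\!\big(\tfrac{-5m_j/16}{x-S_j-m_j/2}+1\big)+\tfrac{m_j}{4}+c_j & x\in(S_j+\tfrac{m_j}{2},S_j+\tfrac{13m_j}{16})\\ -\tfrac{8}{m_j}(x-S_j-\tfrac{7m_j}{8})^2+\tfrac{19m_j}{32}+c_j & x\in[S_j+\tfrac{13m_j}{16},S_j+\tfrac{15m_j}{16})\\ -x+S_j+\tfrac{3m_j}{2}+c_j & x\in[S_j+\tfrac{15m_j}{16},S_{j+1}],\end{cases}$$ and define $F:\mathbb{R}\to\mathbb{R}$ by $F(x)=-x$ for $x\le0$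 and $F(x)=f_j(x)$ for $x\in(S_j,S_{j+1}]$. Let $x_0=0$ and $x_{k+1}=x_k-M_k\dot F(x_k)$ with $M_k=m_kI$ (here $p=1$) for $k\ge0$. Then $\{M_k\}$ consists of symmetric positive definite matrices with $\sum_k\lambda_{\min}(M_k)=\infty$ and $\lambda_{\max}(M_k)\to0$. Moreover, (a) $\lim_k x_k=\infty$, (b) $\lim_k F(x_k)=\infty$, and (c) $\lim_k|\dot F(x_k)|=1$.
   Context: $\dot F$ denotes the derivative of $F$; $\lambda_{\min},\lambda_{\max}$ denote smallest and largest eigenvalues. *)

(* Defs.v *)
From Stdlib Require Import Reals.
From Coquelicot Require Import Coquelicot.
Open Scope R_scope.

Definition Spart (m : nat -> R) (k : nat) : R :=
  match k with
  | O => 0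
  | S k' => sum_f_R0 m k'
  end.

(* The piece f_j on (S_j, S_{j+1}], with mj = m_j, s = S_j, c = c_j.
   (Only its values on (s, s + mj] matter.) *)
Definition fpiece (mj s c x : R) : R :=
  if Rlt_dec x (s + mj / 16) then - x + s + c
  else if Rlt_dec x (s + 3 * mj / 16) then
    8 / mj * (x - s - mj / 8) ^ 2 - 3 * mj / 32 + c
  else if Rlt_dec x (s + mj / 2) then
    - (5 * mj / 16) * exp ((5 * mj / 16) / (x - s - mj / 2) + 1) + mj / 4 + c
  else if Rle_dec x (s + mj / 2) then
    mj / 4 + c
  else if Rlt_dec x (s + 13 * mj / 16) then
    (5 * mj / 16) * exp ((- (5 * mj / 16)) / (x - s - mj / 2) + 1) + mj / 4 + c
  else if Rlt_dec x (s + 15 * mj / 16) then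
    - (8 / mj) * (x - s - 7 * mj / 8) ^ 2 + 19 * mj / 32 + c
  else - x + s + 3 * mj / 2 + c.

Fixpoint cseq (m : nat -> R) (j : nat) : R :=
  match j with
  | O => 0
  | S j' => fpiece (m j') (Spart m j') (cseq m j') (Spart m (S j'))
  end.

Definition fj (m : nat -> R) (j : nat) (x : R) : R :=
  fpiece (m j) (Spart m j) (cseq m j) x.

(* Main.v *)
Require Import Defs.
From Stdlib Require Import Reals Lra.
From Coquelicot Require Import Coquelicot.
Open Scope R_scope.

Ltac crush_fp :=
  unfold fpiece; repeat match goal with
  | |- context [Rlt_dec ?a ?b] => destruct (Rlt_dec a b)
  | |- context [Rle_dec ?a ?b] => destruct (Rle_dec a b) end; lra.

Lemma Spart_S m k : Spart m (S k) = Spart m k + m k.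
Proof. destruct k; simpl; ring. Qed.

Lemma c_S m k : 0 < m k -> cseq m (S k) = cseq m k + m k / 2.
Proof.
  intros hk. change (cseq m (S k)) with (fpiece (m k) (Spart m k) (cseq m k) (Spart m (S k))). rewrite Spart_S. crush_fp.
Qed.

Lemma c_half m k : (forall k, 0 < m k) -> cseq m k = Spart m k / 2.
Proof.
  intros hp; induction k. simpl; lra.
  rewrite c_S, Spart_S, IHk; auto; lra.
Qed.

Lemma local_form (m : nat -> R) (F : R -> R)
  (hpos : forall k, 0 < m k)
  (hFneg : forall y, y <= 0 -> F y = - y)
  (hFpos : forall (j : nat) (y : R),
      Spart m j < y <= Spart m (S j) -> F y = fj m j y) k :
  exists d, 0 < d /\ forall y, Spart m k - d < y < Spart m k + m k / 16 ->
    F y = - y + Spart m k + cseq m k.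
Proof.
  destruct k as [|k].
  - exists 1; split; [lra|]. intros y Hy. simpl in Hy |- *.
    pose proof (hpos 0%nat).
    destruct (Rle_lt_dec y 0).
    + rewrite hFneg; auto; ring.
    + rewrite (hFpos 0%nat); [|simpl; lra]. unfold fj; simpl. crush_fp.
  - exists (m k / 16). pose proof (hpos k). pose proof (hpos (S k)).
    split; [lra|]. intros y Hy.
    rewrite c_S by auto.
    destruct (Rle_lt_dec y (Spart m (S k))).
    + rewrite (hFpos k); [|rewrite Spart_S in *; lra]. unfold fj.
      rewrite Spart_S in *. crush_fp.
    + rewrite (hFpos (S k)); [|rewrite (Spart_S m (S k)); lra]. unfold fj.
      rewrite c_S by auto. crush_fp.
Qed.

Theorem proposition5p4 (m : nat -> R) (F : R -> R) (x : nat -> R)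
  (hpos : forall k, 0 < m k)
  (hdiv : is_lim_seq (fun k => sum_f_R0 m k) p_infty)
  (hm0 : is_lim_seq m 0)
  (hFneg : forall y, y <= 0 -> F y = - y)
  (hFpos : forall (j : nat) (y : R),
      Spart m j < y <= Spart m (S j) -> F y = fj m j y)
  (hx0 : x O = 0)
  (hxS : forall k, x (S k) = x k - m k * Derive F (x k)) :
  (* M_k = m_k I (p = 1): symmetric positive definite,
     lambda_min(M_k) = lambda_max(M_k) = m_k *)
  ((forall k, 0 < m k) /\
   is_lim_seq (fun k => sum_f_R0 m k) p_infty /\
   is_lim_seq m 0) /\
  (* F is differentiable at every iterate, so dot F(x_k) is meaningful *)
  (forall k, ex_derive F (x k)) /\
  is_lim_seq x p_infty /\
  is_lim_seq (fun k => F (x k)) p_infty /\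
  is_lim_seq (fun k => Rabs (Derive F (x k))) 1.
Proof.
  assert (Hd : forall k, is_derive F (Spart m k) (-1) /\ F (Spart m k) = cseq m k).
  { intros k. destruct (local_form m F hpos hFneg hFpos k) as [d [Hd Hy]].
    pose proof (hpos k).
    split.
    2: { rewrite Hy; lra. }
    apply (is_derive_ext_loc (fun y => - y + Spart m k + cseq m k)).
    - assert (He : 0 < Rmin d (m k / 16)) by (apply Rmin_pos; lra).
      exists (mkposreal _ He). intros y Hb. simpl in Hb.
      unfold ball in Hb; simpl in Hb; unfold AbsRing_ball, abs, minus, plus, opp in Hb;
      simpl in Hb.
      apply Rabs_lt_between in Hb.
      pose proof (Rmin_l d (m k / 16)). pose proof (Rmin_r d (m k / 16)).
      symmetry; apply Hy; lra.
    - auto_derive; auto; ring. }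
  assert (Hx : forall k, x k = Spart m k).
  { induction k. rewrite hx0; reflexivity.
    rewrite hxS, IHk, (is_derive_unique _ _ _ (proj1 (Hd k))), Spart_S. ring. }
  assert (HS : is_lim_seq (Spart m) p_infty).
  { apply is_lim_seq_incr_1. apply (is_lim_seq_ext (fun k => sum_f_R0 m k)); auto. }
  split; [auto|]. split.
  { intros k; rewrite Hx. eexists; apply (proj1 (Hd k)). }
  split.
  { apply (is_lim_seq_ext (Spart m)); auto. }
  split.
  { apply (is_lim_seq_ext (fun k => / 2 * Spart m k)).
    { intros k. rewrite Hx, (proj2 (Hd k)), c_half by auto. lra. }
    replace p_infty with (Rbar_mult (/2) p_infty).
    - apply is_lim_seq_scal_l; auto.
    - simpl. unfold Rbar_mult; simpl. destruct (Rle_dec 0 (/2)) as [h|h].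
      + destruct (Rle_lt_or_eq_dec 0 (/2) h); auto. lra.
      + lra. }
  apply (is_lim_seq_ext (fun _ => 1)).
  { intros k. rewrite Hx, (is_derive_unique _ _ _ (proj1 (Hd k))). 
    symmetry; rewrite Rabs_left; lra. }
  apply is_lim_seq_const.
Qed.
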